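(* Let $n$ be a nonnegative integer and let $a,c\in\mathbb{C}$ be such that all hypergeometric series and quotients below are defined (no lower parameter is zero or a negative integer). Then \[ {}_3F_2\!\left(\left.{-2n,a,c \atop \frac{a}{2}-n,\frac{a+1}{2}-n}\right| \frac{1}{4}\right) =\frac{(-1)^n(2n)!\,(c)_n}{n!\,(1-a)_{2n}}\, {}_3F_2\!\left(\left.{-n,1+c-a+n,a-c-n \atop \frac{1}{2},1-c-n}\right| \frac{1}{4}\right) \] and \[ {}_3F_2\!\left(\left.{-2n-1,a,c \atop \frac{a-1}{2}-n,\frac{a}{2}-n}\right| \frac{1}{4}\right) =\frac{(-1)^n(1+c-a+n)(2n+1)!\,(c)_n}{n!\,(1-a)_{2n+1}}\, {}_3F_2\!\left(\left.{-n,2+c-a+n,a-c-n \atop \frac{3}{2},1-c-n}\right| \frac{1}{4}\right). \]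
   Context: For $a\in\mathbb{C}$, $(a)_0=1$ and $(a)_k=a(a+1)\cdots(a+k-1)$ for $k\ge1$. The hypergeometric series is ${}_rF_s\!\left(\left.{\alpha_1,\ldots,\alpha_r\atop \beta_1,\ldots,\beta_s}\right|z\right)=\sum_{k\ge0}\frac{(\alpha_1)_k\cdots(\alpha_r)_k}{k!(\beta_1)_k\cdots(\beta_s)_k}z^k$, with no lower parameter zero or a negative integer; when an upper parameter is $-n$ (or $-2n$, $-2n-1$) it is a finite sum. *)

(* Defs.v *)
(* The complex numbers are modelled by an arbitrary
   numClosedFieldType C (e.g. algC, or R[i] for a real closed field R);
   the identity is stated for all such C. *)
From mathcomp Require Import all_boot all_order all_algebra.
Set Implicit Arguments. Unset Strict Implicit. Unset Printing Implicit Defensive.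
Import Order.TTheory GRing.Theory Num.Theory.
Local Open Scope ring_scope.

Definition poch {F : pzRingType} (a : F) (k : nat) : F :=
  \prod_(i < k) (a + i%:R).

Definition not_npint {F : pzRingType} (b : F) : Prop :=
  forall k : nat, b + k%:R != 0.

(* Terminating 3F2 series: the partial sum over k = 0..N.  When one upper
   parameter is -N (N : nat), all terms with k > N vanish, so this is
   exactly the hypergeometric series 3F2. *)
Definition F32 {F : fieldType} (N : nat) (a1 a2 a3 b1 b2 z : F) : F :=
  \sum_(k < N.+1)
    poch a1 k * poch a2 k * poch a3 k /
      ((k`!)%:R * poch b1 k * poch b2 k) * z ^+ k.

(* Main.v *)
Require Import Defs.
From mathcomp Require Import all_boot all_order all_algebra.
From mathcomp Require Import ring lra zify.
Import Order.TTheory GRing.Theory Num.Theory.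
Local Open Scope ring_scope.
Set Implicit Arguments. Unset Strict Implicit. Unset Printing Implicit Defensive.

Section Helpers.
Variable R : numFieldType.

Definition ff (x : R) (k : nat) : R := \prod_(i < k) (x - i%:R).
Definition gb (x : R) (k : nat) : R := ff x k / (k`!)%:R.

Lemma fact_neq0 k : (k`!)%:R != 0 :> R.
Proof. by rewrite pnatr_eq0 -lt0n fact_gt0. Qed.

Lemma pochS (x : R) k : poch x k.+1 = poch x k * (x + k%:R).
Proof. by rewrite /poch big_ord_recr. Qed.

Lemma pochSl (x : R) k : poch x k.+1 = x * poch (x + 1) k.
Proof.
rewrite /poch big_ord_recl /=; congr (_ * _); first by rewrite addr0.
apply: eq_bigr => i _; rewrite /bump /= add1n -natr1; ring.
Qed.

Lemma ffS (x : R) k : ff x k.+1 = ff x k * (x - k%:R).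
Proof. by rewrite /ff big_ord_recr. Qed.

Lemma ffSl (x : R) k : ff x k.+1 = x * ff (x - 1) k.
Proof.
rewrite /ff big_ord_recl /=; congr (_ * _); first by rewrite subr0.
apply: eq_bigr => i _; rewrite /bump /= add1n -natr1; ring.
Qed.

Lemma pochD (x : R) p q : poch x (p + q) = poch x p * poch (x + p%:R) q.
Proof.
rewrite /poch big_split_ord; congr (_ * _); apply: eq_bigr => i _.
by rewrite /= natrD addrA.
Qed.

Lemma ffD (x : R) p q : ff x (p + q) = ff x p * ff (x - p%:R) q.
Proof.
rewrite /ff big_split_ord; congr (_ * _); apply: eq_bigr => i _.
by rewrite /= natrD opprD addrA.
Qed.

Lemma ff_poch (y : R) r : ff y r = poch (y - r%:R + 1) r.
Proof.
elim: r y => [|r IH] y; first by rewrite /ff /poch !big_ord0.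
rewrite ffSl IH pochS; rewrite mulrC; congr (poch _ _ * _).
  by rewrite -natr1; ring.
by rewrite -natr1; ring.
Qed.

Lemma poch_neg (x : R) k : poch (- x) k = (-1) ^+ k * ff x k.
Proof.
elim: k => [|k IH]; first by rewrite /poch /ff !big_ord0 mulr1.
by rewrite pochS ffS IH exprS; ring.
Qed.

Lemma poch1 k : poch (1 : R) k = (k`!)%:R.
Proof.
elim: k => [|k IH]; first by rewrite /poch big_ord0.
by rewrite pochS IH factS natrM mulrC -natr1 addrC.
Qed.

Lemma poch2 k : poch (2%:R : R) k = (k.+1`!)%:R.
Proof.
elim: k => [|k IH]; first by rewrite /poch big_ord0.
by rewrite pochS IH [(k.+2)`!]factS natrM mulrC -natrD add2n.
Qed.

Lemma ff_nat n j : ff (n%:R : R) j = (n ^_ j)%:R.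
Proof.
elim: j n => [|j IH] n; first by rewrite /ff big_ord0.
rewrite ffSl ffactnS natrM; case: n => [|n]; first by rewrite !mul0r.
by rewrite -natr1 addrK IH.
Qed.

Lemma gb_nat k l : gb (k%:R) l = ('C(k, l))%:R :> R.
Proof.
by rewrite /gb ff_nat -bin_ffact natrM mulfK // fact_neq0.
Qed.


Lemma ff_vdm (x y : R) m :
  ff (x + y) m = \sum_(l < m.+1) ('C(m, l))%:R * ff x l * ff y (m - l).
Proof.
elim: m => [|m IH].
  by rewrite big_ord1 /ff !big_ord0 bin0 mul1r mulr1.
rewrite ffS IH mulr_suml.
have E1 : \sum_(l < m.+2) ('C(m, l))%:R * ff x l * ff y (m.+1 - l)
   = \sum_(l < m.+1) ('C(m, l))%:R * ff x l * ff y (m.+1 - l).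
  by rewrite big_ord_recr /= bin_small // mul0r mul0r addr0.
have E2 : \sum_(l < m.+2) ('C(m, l))%:R * ff x l * ff y (m.+1 - l)
   = ff y m.+1 + \sum_(l < m.+1) ('C(m, l.+1))%:R * ff x l.+1 * ff y (m - l).
  by rewrite big_ord_recl /= bin0 subn0 /ff big_ord0 mul1r mul1r.
rewrite [RHS]big_ord_recl /= bin0 subn0 [ff x 0]/ff big_ord0 mul1r mul1r.
rewrite [in RHS](eq_bigr (fun i : 'I_m.+1 => 'C(m, i)%:R * ff x i.+1 * ff y (m - i) + 'C(m, i.+1)%:R * ff x i.+1 * ff y (m - i))); last first.
  by move=> i _; rewrite /bump /= add1n binS natrD mulrDl mulrDl subSS addrC.
rewrite big_split /= addrCA -E2 E1 -big_split /=.
apply: eq_bigr => [[l hl]] _ /=.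
have hlm : (l <= m)%N by [].
rewrite ffS subSn // ffS natrB //; ring.
Qed.

Lemma gb_vdm (x y : R) m :
  gb (x + y) m = \sum_(l < m.+1) gb x l * gb y (m - l).
Proof.
rewrite /gb ff_vdm mulr_suml; apply: eq_bigr => [[l hl]] _ /=.
have hlm : (l <= m)%N by [].
rewrite -(bin_fact hlm) natrM natrM.
have h1 := fact_neq0 l; have h2 := fact_neq0 (m - l).
have h3 : ('C(m, l))%:R != 0 :> R by rewrite pnatr_eq0 -lt0n bin_gt0.
by field; rewrite h1 h2 h3.
Qed.

Lemma gb_tri (d : R) k l : (l <= k)%N ->
  gb d k * ('C(k, l))%:R = gb d l * gb (d - l%:R) (k - l).
Proof.
move=> hlk; rewrite /gb -{1}(subnKC hlk) ffD.
rewrite -(bin_fact hlk) !natrM.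
have h1 := fact_neq0 l; have h2 := fact_neq0 (k - l).
have h3 : ('C(k, l))%:R != 0 :> R by rewrite pnatr_eq0 -lt0n bin_gt0.
by field; rewrite h1 h2 h3.
Qed.


Lemma shift_sum (G : nat -> R) i M N : (i + M <= N)%N ->
  \sum_(r < M) G (r + i)%N = \sum_(k < N | (i <= k < i + M)%N) G k.
Proof.
elim: M => [|M IH] h.
  rewrite big_ord0 big_pred0 // => k; apply/negbTE; lia.
rewrite big_ord_recr /= IH; last by lia.
have hj : (i + M < N)%N by lia.
rewrite [RHS](bigD1 (Ordinal hj)) /=; last by lia.
rewrite addrC addnC; congr (_ + _); apply: eq_bigl => k.
rewrite -val_eqE /=; lia.
Qed.

Lemma core_id (A d : R) m n : (n.*2 <= m)%N -> (m <= n.*2.+1)%N ->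
  \sum_(k < m.+1) gb d k * gb (A + k%:R) (m - k) =
  \sum_(i < n.+1) gb d i * gb (A + d - i%:R) (m - 2 * i).
Proof.
move=> h1 h2.
pose T k i := gb d k * ('C(k, i))%:R * gb A (m - k - i).
have SL : forall k : 'I_m.+1, gb d k * gb (A + k%:R) (m - k) =
   \sum_(i < m.+1 | ((i <= k) && (i + k <= m))%N) T k i.
  move=> [k hk] /=.
  rewrite addrC gb_vdm mulr_sumr.
  rewrite (big_ord_widen m.+1 (fun l => gb d k * (gb k%:R l * gb A (m - k - l)))); last by lia.
  rewrite big_mkcond [RHS]big_mkcond; apply: eq_bigr => [[i hi]] _ /=.
  rewrite /T gb_nat.
  have -> : (i < (m - k).+1)%N = (i + k <= m)%N by lia.
  case: (leqP i k) => hik /=; first by case: (i + k <= m)%N; rewrite // mulrA.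
  by rewrite bin_small // mul0r mulr0 if_same.
have SR : forall i : 'I_n.+1, gb d i * gb (A + d - i%:R) (m - 2 * i) =
   \sum_(k < m.+1 | ((i <= k) && (i + k <= m))%N) T k i.
  move=> [i hi] /=.
  have -> : A + d - i%:R = (d - i%:R) + A by ring.
  rewrite gb_vdm mulr_sumr.
  rewrite (eq_bigr (fun r : 'I_(m - 2 * i).+1 => T (r + i)%N i)); last first.
    move=> [r hr] _ /=; rewrite /T gb_tri; last by lia.
    rewrite addnK mulrA; congr (_ * gb A _); lia.
  rewrite (shift_sum (fun k => T k i) (N := m.+1)); last by lia.
  by apply: eq_bigl => k; lia.
rewrite (eq_bigr _ (fun k _ => SL k)) (eq_bigr _ (fun i _ => SR i)).
rewrite (big_ord_widen m.+1 (fun i => \sum_(k < m.+1 | ((i <= k) && (i + k <= m))%N) T k i)); last by lia.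
rewrite [RHS]big_mkcond /=.
under eq_bigr => k _ do rewrite big_mkcond.
rewrite exchange_big /=; apply: eq_bigr => [[i hi]] _ /=.
case: ifP => hin; first by rewrite [RHS]big_mkcond.
rewrite big1 // => k _; case: ifP => // hc; lia.
Qed.


Lemma sign_sq k : (-1) ^+ k * (-1) ^+ k = 1 :> R.
Proof. by rewrite -exprD -signr_odd oddD addbb expr0. Qed.

Lemma poch_half (x : R) k :
  poch (x / 2%:R) k * poch ((x + 1) / 2%:R) k * 4%:R ^+ k = poch x (2 * k).
Proof.
have h2 : 2%:R != 0 :> R by rewrite pnatr_eq0.
elim: k => [|k IH]; first by rewrite /poch !big_ord0 !mulr1.
rewrite (_ : (2 * k.+1 = (2 * k).+1.+1)%N); last by lia.
rewrite !pochS -IH exprS.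
rewrite (_ : ((2 * k).+1)%:R = 2%:R * k%:R + 1 :> R); last by rewrite -natr1 natrM.
rewrite (_ : ((2 * k))%:R = 2%:R * k%:R :> R); last by rewrite natrM.
rewrite (_ : 4%:R = 2%:R * 2%:R :> R); last by rewrite -natrM.
by field.
Qed.

Lemma pair_even (x : R) j :
  ff (x + j%:R - 1) (2 * j) = (-1) ^+ j * poch (1 - x) j * poch x j.
Proof.
rewrite ff_poch (_ : x + j%:R - 1 - (2 * j)%:R + 1 = x - j%:R); last first.
  by rewrite natrM; ring.
rewrite mul2n -addnn pochD (_ : x - j%:R + j%:R = x); last by ring.
rewrite (_ : 1 - x = - (x - 1)); last by ring.
rewrite poch_neg ff_poch (_ : x - 1 - j%:R + 1 = x - j%:R); last by ring.
by rewrite mulrA sign_sq mul1r.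
Qed.

Lemma pair_odd (x : R) j :
  ff (x + j%:R - 1) (2 * j).+1 = (-1) ^+ j.+1 * poch (1 - x) j.+1 * poch x j.
Proof.
rewrite ff_poch (_ : x + j%:R - 1 - ((2 * j).+1)%:R + 1 = x - j%:R - 1); last first.
  by rewrite -natr1 natrM; ring.
rewrite (_ : ((2 * j).+1 = j.+1 + j)%N); last by lia.
rewrite pochD (_ : x - j%:R - 1 + (j.+1)%:R = x); last by rewrite -natr1; ring.
rewrite (_ : 1 - x = - (x - 1)); last by ring.
rewrite poch_neg ff_poch (_ : x - 1 - (j.+1)%:R + 1 = x - j%:R - 1); last first.
  by rewrite -natr1; ring.
by rewrite mulrA sign_sq mul1r.
Qed.

Lemma poch_c (c : R) n j : (j <= n)%N ->
  poch c n = (-1) ^+ j * poch (1 - c - n%:R) j * poch c (n - j).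
Proof.
move=> hj.
rewrite -{1}(subnK hj) pochD.
rewrite (_ : 1 - c - n%:R = - (c + n%:R - 1)); last by ring.
rewrite poch_neg ff_poch (_ : c + n%:R - 1 - j%:R + 1 = c + (n - j)%:R); last first.
  by rewrite natrB //; ring.
rewrite mulrA sign_sq mul1r mulrC //.
Qed.


Lemma lhs_eq (a c : R) m :
  (forall k, poch ((a - m%:R) / 2%:R) k != 0) ->
  (forall k, poch ((a - m%:R + 1) / 2%:R) k != 0) ->
  poch (1 - a) m != 0 ->
  F32 m (- m%:R) a c ((a - m%:R) / 2%:R) ((a - m%:R + 1) / 2%:R) (1 / 4%:R)
  = (-1) ^+ m * (m`!)%:R / poch (1 - a) m *
    \sum_(k < m.+1) gb (- c) k * gb (a - 1 + k%:R) (m - k).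
Proof.
move=> hb1 hb2 hP.
have h4 : 4%:R != 0 :> R by rewrite pnatr_eq0.
have hPm : poch (1 - a) m = (-1) ^+ m * poch (a - m%:R) m.
  rewrite (_ : 1 - a = - (a - 1)); last by ring.
  rewrite poch_neg ff_poch (_ : a - 1 - m%:R + 1 = a - m%:R) //; ring.
have hPm0 : poch (a - m%:R) m != 0 by move: hP; rewrite hPm mulf_eq0 signr_eq0.
rewrite /F32 mulr_sumr; apply: eq_bigr => [[k hk]] _ /=.
have hkm : (k <= m)%N by [].
have hb10 := hb1 k.
have h4k : 4%:R ^+ k != 0 :> R by rewrite expf_neq0.
have hQ : poch ((a - m%:R + 1) / 2%:R) k =
    poch (a - m%:R) (2 * k) / (4%:R ^+ k * poch ((a - m%:R) / 2%:R) k).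
  rewrite -poch_half; field; rewrite h4k hb10 //.
have hQ0 : poch (a - m%:R) (2 * k) != 0.
  by rewrite -poch_half !mulf_neq0.
have hPr : ff (a - 1 + k%:R) (m - k) =
    poch a k * poch (a - m%:R) m / poch (a - m%:R) (2 * k).
  rewrite ff_poch (_ : a - 1 + k%:R - (m - k)%:R + 1 = a - m%:R + (2 * k)%:R); last first.
    by rewrite natrB // natrM; ring.
  rewrite (_ : poch a k = poch (a - m%:R + m%:R) k); last by rewrite subrK.
  rewrite [poch (a - m%:R + m%:R) k * _]mulrC -pochD (_ : (m + k = 2 * k + (m - k))%N); last by lia.
  rewrite pochD; field; rewrite hQ0 //.
have hC : poch c k = (-1) ^+ k * ff (- c) k by rewrite -poch_neg opprK.
have hN : poch (- m%:R) k = (-1) ^+ k * (m ^_ k)%:R :> R by rewrite poch_neg ff_nat.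
have hF : (m`!)%:R = (m ^_ k)%:R * ((m - k)`!)%:R :> R by rewrite -natrM ffact_fact.
rewrite /gb hC hN hQ hF hPm hPr.
have hk0 := fact_neq0 k; have hmk0 := fact_neq0 (m - k).
rewrite div1r exprVn; move: (4%:R ^+ k) h4k => q hq.
have hsm : (-1) ^+ m != 0 :> R by rewrite signr_eq0.
move: ((-1) ^+ m) hsm => sm hsm.
by rewrite -[(-1) ^+ k]signr_odd; case: (odd k); field; rewrite hmk0 hQ0 hk0 hPm0 hsm hq hb10.
Qed.


Lemma rhs_even (a c P : R) n : P != 0 -> (forall j, poch (1 - c - n%:R) j != 0) ->
  (-1) ^+ n * ((2 * n)`!)%:R * poch c n / ((n`!)%:R * P)
   * F32 n (- n%:R) (1 + c - a + n%:R) (a - c - n%:R) (1 / 2%:R) (1 - c - n%:R) (1 / 4%:R)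
  = (-1) ^+ (2 * n) * ((2 * n)`!)%:R / P *
    \sum_(i < n.+1) gb (- c) i * gb (a - 1 + - c - i%:R) (2 * n - 2 * i).
Proof.
move=> hP hD.
rewrite (_ : (-1) ^+ (2 * n) = 1 :> R); last by rewrite exprM sqrrN !expr1n.
rewrite mul1r /F32 !mulr_sumr [RHS](reindex_inj rev_ord_inj) /=.
apply: eq_bigr => [[j hj]] _ /=.
rewrite subSS.
have hjn : (j <= n)%N by [].
have hc' : poch c (n - j) = (-1) ^+ (n - j) * ff (- c) (n - j) by rewrite -poch_neg opprK.
have hN : poch (- n%:R) j = (-1) ^+ j * (n ^_ j)%:R :> R by rewrite poch_neg ff_nat.
have h4 : 4%:R != 0 :> R by rewrite pnatr_eq0.
have h4j : 4%:R ^+ j != 0 :> R by rewrite expf_neq0.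
have hj0 := fact_neq0 j; have h2j0 := fact_neq0 (2 * j); have hnj0 := fact_neq0 (n - j).
have hH : poch (2%:R^-1) j = ((2 * j)`!)%:R / ((j`!)%:R * 4%:R ^+ j) :> R.
  have e := poch_half (1 : R) j.
  rewrite (_ : ((1 : R) + 1) / 2%:R = 1) in e; last by rewrite -mulr2n divff // pnatr_eq0.
  rewrite !poch1 div1r in e.
  rewrite -e; field; rewrite hj0 h4j //.
have hFF : ff (a - 1 + - c - (n - j)%:R) (2 * j) =
    (-1) ^+ j * poch (1 + c - a + n%:R) j * poch (a - c - n%:R) j.
  rewrite (_ : a - 1 + - c - (n - j)%:R = (a - c - n%:R) + j%:R - 1); last first.
    by rewrite natrB //; ring.
  rewrite pair_even (_ : 1 - (a - c - n%:R) = 1 + c - a + n%:R) //; ring.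
have h2j : (2 * n - 2 * (n - j) = 2 * j)%N by lia.
have hF : (n`!)%:R = (n ^_ j)%:R * ((n - j)`!)%:R :> R by rewrite -natrM ffact_fact.
have hnj : (n ^_ j)%:R != 0 :> R by rewrite pnatr_eq0 -lt0n ffact_gt0.
have hs : (-1) ^+ n = (-1) ^+ (n - j) * (-1) ^+ j :> R by rewrite -exprD subnK.
have hDj := hD j.
rewrite /gb h2j hFF (poch_c c hjn) hc' hN hH hF hs.
rewrite div1r exprVn; move: (4%:R ^+ j) h4j => q hq.
rewrite -[(-1) ^+ j]signr_odd -[(-1) ^+ (n - j)]signr_odd.
by case: (odd j); case: (odd (n - j)); field; rewrite ?hP ?hDj ?hj0 ?h2j0 ?hnj0 ?hnj ?hq.
Qed.


Lemma rhs_odd (a c P : R) n : P != 0 -> (forall j, poch (1 - c - n%:R) j != 0) ->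
  (-1) ^+ n * (1 + c - a + n%:R) * (((2 * n).+1)`!)%:R * poch c n / ((n`!)%:R * P)
   * F32 n (- n%:R) (2 + c - a + n%:R) (a - c - n%:R) (3%:R / 2%:R) (1 - c - n%:R) (1 / 4%:R)
  = (-1) ^+ (2 * n).+1 * (((2 * n).+1)`!)%:R / P *
    \sum_(i < n.+1) gb (- c) i * gb (a - 1 + - c - i%:R) ((2 * n).+1 - 2 * i).
Proof.
move=> hP hD.
rewrite (_ : (-1) ^+ (2 * n).+1 = -1 :> R); last by rewrite exprS exprM sqrrN !expr1n mulr1.
rewrite /F32 !mulr_sumr [RHS](reindex_inj rev_ord_inj) /=.
apply: eq_bigr => [[j hj]] _ /=.
rewrite subSS.
have hjn : (j <= n)%N by [].
have hc' : poch c (n - j) = (-1) ^+ (n - j) * ff (- c) (n - j) by rewrite -poch_neg opprK.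
have hN : poch (- n%:R) j = (-1) ^+ j * (n ^_ j)%:R :> R by rewrite poch_neg ff_nat.
have h4 : 4%:R != 0 :> R by rewrite pnatr_eq0.
have h4j : 4%:R ^+ j != 0 :> R by rewrite expf_neq0.
have hj0 := fact_neq0 j; have h2j0 := fact_neq0 (2 * j).+1; have hnj0 := fact_neq0 (n - j).
have hH : poch (3%:R / 2%:R) j = (((2 * j).+1)`!)%:R / ((j`!)%:R * 4%:R ^+ j) :> R.
  have e := poch_half (2%:R : R) j.
  rewrite (_ : (2%:R : R) / 2%:R = 1) in e; last by rewrite divff // pnatr_eq0.
  rewrite (_ : (2%:R : R) + 1 = 3%:R) in e; last by rewrite natr1.
  rewrite poch1 poch2 in e.
  rewrite -e; field; rewrite hj0 h4j //.
have hFF : ff (a - 1 + - c - (n - j)%:R) (2 * j).+1 =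
    (-1) ^+ j.+1 * (1 + c - a + n%:R) * poch (2 + c - a + n%:R) j * poch (a - c - n%:R) j.
  rewrite (_ : a - 1 + - c - (n - j)%:R = (a - c - n%:R) + j%:R - 1); last first.
    by rewrite natrB //; ring.
  rewrite pair_odd pochSl (_ : 1 - (a - c - n%:R) + 1 = 2 + c - a + n%:R); last by ring.
  rewrite (_ : 1 - (a - c - n%:R) = 1 + c - a + n%:R); last by ring.
  by rewrite !mulrA.
have h2j : ((2 * n).+1 - 2 * (n - j) = (2 * j).+1)%N by lia.
have hF : (n`!)%:R = (n ^_ j)%:R * ((n - j)`!)%:R :> R by rewrite -natrM ffact_fact.
have hnj : (n ^_ j)%:R != 0 :> R by rewrite pnatr_eq0 -lt0n ffact_gt0.
have hs : (-1) ^+ n = (-1) ^+ (n - j) * (-1) ^+ j :> R by rewrite -exprD subnK.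
have hDj := hD j.
rewrite /gb h2j hFF (poch_c c hjn) hc' hN.
rewrite hH hF hs exprS.
rewrite div1r exprVn; move: (4%:R ^+ j) h4j => q hq.
rewrite -[(-1) ^+ j]signr_odd -[(-1) ^+ (n - j)]signr_odd.
by case: (odd j); case: (odd (n - j)); field; rewrite ?hP ?hDj ?hj0 ?h2j0 ?hnj0 ?hnj ?hq.
Qed.

End Helpers.

Lemma npint_poch (F : numFieldType) (b : F) : not_npint b -> forall k, poch b k != 0.
Proof. by move=> h k; rewrite /poch; apply/prodf_neq0 => i _; exact: h. Qed.

Theorem proposition5p2 (C : numClosedFieldType) (n : nat) (a c : C) :
  ((not_npint (a / 2%:R - n%:R) -> not_npint ((a + 1) / 2%:R - n%:R) ->
    not_npint (1 - c - n%:R) -> poch (1 - a) (2 * n) != 0 ->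
    F32 (2 * n) (- (2 * n)%:R) a c (a / 2%:R - n%:R) ((a + 1) / 2%:R - n%:R)
        (1 / 4%:R)
    = (-1) ^+ n * ((2 * n)`!)%:R * poch c n / ((n`!)%:R * poch (1 - a) (2 * n))
      * F32 n (- n%:R) (1 + c - a + n%:R) (a - c - n%:R) (1 / 2%:R)
            (1 - c - n%:R) (1 / 4%:R))
  /\
  (not_npint ((a - 1) / 2%:R - n%:R) -> not_npint (a / 2%:R - n%:R) ->
    not_npint (1 - c - n%:R) -> poch (1 - a) (2 * n).+1 != 0 ->
    F32 (2 * n).+1 (- ((2 * n).+1)%:R) a c ((a - 1) / 2%:R - n%:R)
        (a / 2%:R - n%:R) (1 / 4%:R)
    = (-1) ^+ n * (1 + c - a + n%:R) * (((2 * n).+1)`!)%:R * poch c n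
        / ((n`!)%:R * poch (1 - a) (2 * n).+1)
      * F32 n (- n%:R) (2 + c - a + n%:R) (a - c - n%:R) (3%:R / 2%:R)
            (1 - c - n%:R) (1 / 4%:R)))%R.
Proof.
have h2 : 2%:R != 0 :> C by rewrite pnatr_eq0.
split.
- move=> h1 h1' h3 h4.
  have e1 : a / 2%:R - n%:R = (a - (2 * n)%:R) / 2%:R.
    by rewrite natrM; field.
  have e2 : (a + 1) / 2%:R - n%:R = (a - (2 * n)%:R + 1) / 2%:R.
    by rewrite natrM; field.
  rewrite e1 e2 in h1 h1' *.
  rewrite (@lhs_eq _ a c _ (npint_poch h1) (npint_poch h1') h4).
  rewrite (@core_id _ (a - 1) (- c) (2 * n) n); [|lia|lia].
  by rewrite (@rhs_even _ a c _ n h4 (npint_poch h3)).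
- move=> h1 h1' h3 h4.
  have e0 : ((2 * n).+1)%:R = 2%:R * n%:R + 1 :> C by rewrite -natr1 natrM.
  have e1 : (a - 1) / 2%:R - n%:R = (a - ((2 * n).+1)%:R) / 2%:R.
    by rewrite e0; field.
  have e2 : a / 2%:R - n%:R = (a - ((2 * n).+1)%:R + 1) / 2%:R.
    by rewrite e0; field.
  rewrite e1 e2 in h1 h1' *.
  rewrite (@lhs_eq _ a c _ (npint_poch h1) (npint_poch h1') h4).
  rewrite (@core_id _ (a - 1) (- c) (2 * n).+1 n); [|lia|lia].
  by rewrite (@rhs_odd _ a c _ n h4 (npint_poch h3)).
Qed.
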